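(* Fix an activity $\lambda>0$. For every $\epsilon>0$ and every integer $\Delta\geq 1$ there exists $\overline{h}(\epsilon,\Delta)$ such that for every finite graph $G$ of maximum degree at most $\Delta$, every vertex $v$ of $G$, and every $h\geq \overline{h}(\epsilon,\Delta)$, $$|\log x_v^{h}(v)-\log p_{G,\lambda}(v)|\leq \epsilon .$$ Moreover $\overline{h}(\epsilon,\Delta)=\tilde{O}\left(\sqrt{\Delta}\log(1/\epsilon)\right)$ and $$\lim_{\Delta\to \infty}\frac{1}{\sqrt{\Delta}} \lim_{\epsilon\to 0}\frac{\overline{h}(\epsilon,\Delta)}{\log (1/\epsilon)} = \sqrt{\lambda}.$$
   Context: Let $G=(V,E)$ be a finite undirected graph (parallel edges and self-loops allowed) and let $\mathbb{M}$ be its set of matchings (sets of edges no two sharing an endpoint). For $\lambda>0$ the partition function is $Z(G,\lambda)=\sum_{M\in\mathbb{M}}\lambda^{|M|}$, the Gibbs distribution is $\pi_{G,\lambda}(M)=\lambda^{|M|}/Z(G,\lambda)$, and $p_{G,\lambda}(v)=\sum_{M\in\mathbb{M},\,M\text{ does not cover }v}\pi_{G,\lambda}(M)$ is the probability that $v$ is not covered. The path-tree $T_G(v)$ is the rooted tree whose nodes are the finite simple paths $v_0v_1\dots v_k$ ($k\ge 0$, distinct vertices, consecutive ones adjacent) with $v_0=v$, whose edges join $v_0\dots v_k$ to $v_0\dots v_kv_{k+1}$, and whose root is the one-vertex path $v$. For $h\geq 1$, $T_G^h(v)$ is the path-tree truncated at depth $h$, and ${\bf x}^h(v)=(x^h_u(v))_{u\in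 T^h_G(v)}$ is the unique solution of $x_u(v)=\bigl(1+\lambda\sum_{w\text{ child of }u\text{ in }T^h_G(v)}x_w(v)\bigr)^{-1}$ for all nodes $u$ (empty sum $=0$); $x^h_v(v)$ denotes its value at the root. $\tilde{O}$ hides polylogarithmic factors; the limit in $\epsilon$ is taken first with $\Delta$ fixed. *)

(* Defs.v *)
From HB Require Import structures.
From mathcomp Require Import all_boot all_order all_algebra.
From mathcomp Require Import all_classical all_reals all_analysis.
Set Implicit Arguments. Unset Strict Implicit. Unset Printing Implicit Defensive.
Import Order.TTheory GRing.Theory Num.Theory.
Local Open Scope ring_scope.

(* A finite undirected multigraph (parallel edges and self-loops allowed):
   vertex type V, edge type E, each edge e has an (unordered) pair of
   endpoints [ends e]; a self-loop has both endpoints equal. *)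
Section Graph.
Variables (V E : finType) (ends : E -> V * V).

Definition incident (e : E) (u : V) : bool := ((ends e).1 == u) || ((ends e).2 == u).

Definition is_loop (e : E) : bool := (ends e).1 == (ends e).2.

(* degree: number of edge-ends at u (a self-loop counts twice) *)
Definition degree (u : V) : nat :=
  (#|[set e | (ends e).1 == u]| + #|[set e | (ends e).2 == u]|)%N.

Definition max_degree_le (D : nat) : Prop := forall u : V, (degree u <= D)%N.

Definition matching (M : {set E}) : bool :=
  [forall e in M, ~~ is_loop e] &&
  [forall e in M, forall f in M, (e != f) ==>
     ~~ [exists u, incident e u && incident f u]].

Definition covers (M : {set E}) (v : V) : bool := [exists e in M, incident e v].

Variable R : realType.

Definition Zpart (lambda : R) : R :=
  \sum_(M : {set E} | matching M) lambda ^+ #|M|.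

Definition p_uncov (lambda : R) (v : V) : R :=
  (\sum_(M : {set E} | matching M && ~~ covers M v) lambda ^+ #|M|) / Zpart lambda.

Definition step (e : E) (u w : V) : bool :=
  (((ends e).1 == u) && ((ends e).2 == w)) || (((ends e).2 == u) && ((ends e).1 == w)).

(* A node of the path-tree
   is a simple path from the root; it is determined for the recursion by its
   last vertex u and its vertex set S, and its children are the one-step
   extensions along an edge e from u to a vertex w not in S (one child per
   edge, so parallel edges give distinct children).  [xrec d u S] is the value
   x_u at a node whose subtree in the truncated tree has depth d (leaves: d = 0,
   empty sum, value 1). *)
Fixpoint xrec (lambda : R) (d : nat) (u : V) (S : {set V}) {struct d} : R :=
  match d with
  | 0 => 1
  | d'.+1 =>
      (1 + lambda * \sum_(e : E) \sum_(w : V | step e u w && (w \notin S))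
                      xrec lambda d' w (w |: S))^-1
  end.

Definition x_root (lambda : R) (h : nat) (v : V) : R := xrec lambda h v [set v].

End Graph.

(* Main.v *)
Require Import Defs.
From HB Require Import structures.
From mathcomp Require Import all_boot all_order all_algebra.
From mathcomp Require Import all_classical all_reals all_analysis.
From mathcomp Require Import ring lra.
Import Order.TTheory GRing.Theory Num.Theory numFieldNormedType.Exports.
Local Open Scope ring_scope.
Set Implicit Arguments. Unset Strict Implicit. Unset Printing Implicit Defensive.
Section Comb.
Variables (V E : finType) (ends : E -> V * V).

Definition other (e : E) (u : V) : V :=
  if (ends e).1 == u then (ends e).2 else (ends e).1.

Lemma step_other e u w :
  step ends e u w = incident ends e u && (w == other e u).
Proof.
rewrite /step /incident /other; case: (ends e) => a b /=.
have [->|nau] := eqVneq a u; have [->|nbu] := eqVneq b u => /=;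
  rewrite ?eqxx ?andbT ?orbF ?andbF //=; by rewrite ?(eq_sym w) ?orbb.
Qed.

Lemma incident_other e u x : incident ends e u ->
  incident ends e x = (x == u) || (x == other e u).
Proof.
rewrite /incident /other; case: (ends e) => a b /=.
have [->|nau] := eqVneq a u => /=.
  by move=> _; rewrite !(eq_sym x).
by move=> /eqP ->; rewrite !(eq_sym x) orbC.
Qed.

Lemma incident_other_self e u : incident ends e u -> incident ends e (other e u).
Proof. by move=> h; rewrite (@incident_other e u (other e u) h) eqxx orbT. Qed.

Lemma loop_other e u : incident ends e u -> is_loop ends e = (other e u == u).
Proof.
rewrite /incident /other /is_loop; case: (ends e) => a b /=.
have [->|nau] := eqVneq a u => /=; first by rewrite eq_sym.
by move=> /eqP ->; rewrite eq_sym.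
Qed.

Variable R : realType.

Lemma sum_step (F : V -> R) (P : pred V) e u :
  \sum_(w | step ends e u w && P w) F w =
  if incident ends e u && P (other e u) then F (other e u) else 0.
Proof.
under eq_bigl do rewrite step_other.
case Hi: (incident ends e u) => /=; last by rewrite big_pred0.
case Po: (P (other e u)).
  by rewrite (big_pred1 (other e u)) // => w /=; case: eqP => // ->; rewrite Po.
by rewrite big_pred0 // => w; case: eqP => // ->; rewrite Po.
Qed.

Variable lambda : R.

Lemma xrecS d u S : xrec ends lambda d.+1 u S =
  (1 + lambda * \sum_(e | incident ends e u && (other e u \notin S))
      xrec ends lambda d (other e u) (other e u |: S))^-1.
Proof.
rewrite /=; congr (_ ^-1); congr (_ + _); congr (_ * _).
rewrite [RHS]big_mkcond; apply: eq_bigr => e _.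
by rewrite (sum_step (fun w => xrec ends lambda d w (w |: S)) (fun w => w \notin S)).
Qed.

End Comb.
Section Match.
Variables (V E : finType) (ends : E -> V * V).
Local Notation inc := (incident ends).
Local Notation other := (other ends).

Definition avoids (M : {set E}) (T : {set V}) : bool := [forall x in T, ~~ covers ends M x].

Lemma match_noloop (M : {set E}) e : matching ends M -> e \in M -> ~~ is_loop ends e.
Proof. by case/andP => /forall_inP h _ /h. Qed.

Lemma match_uniq (M : {set E}) e f x : matching ends M -> e \in M -> f \in M ->
  inc e x -> inc f x -> e = f.
Proof.
case/andP => _ /forall_inP h he hf iex ifx.
move: (h e he) => /forall_inP /(_ f hf) /implyP.
case: eqVneq => // _ /(_ isT) /existsP []; exists x; by rewrite iex ifx.
Qed.

Lemma match_intro (M : {set E}) : (forall e, e \in M -> ~~ is_loop ends e) ->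
  (forall e f x, e \in M -> f \in M -> inc e x -> inc f x -> e = f) ->
  matching ends M.
Proof.
move=> h1 h2; apply/andP; split; first by apply/forall_inP.
apply/forall_inP => e he; apply/forall_inP => f hf; apply/implyP => nef.
apply/existsP => -[x /andP [iex ifx]].
by move/eqP: nef; apply; apply: (h2 e f x).
Qed.

Lemma coversP (M : {set E}) x : reflect (exists2 f, f \in M & inc f x) (covers ends M x).
Proof. exact: (iffP exists_inP). Qed.

Lemma coversU1 e (M : {set E}) x : covers ends (e |: M) x = inc e x || covers ends M x.
Proof.
apply/coversP/orP.
  move=> [f]; rewrite in_setU1 => /orP [/eqP -> |hf] hx; first by left.
  by right; apply/coversP; exists f.
case=> [h|/coversP [f hf hx]]; first by exists e; rewrite ?setU11.
by exists f; rewrite // in_setU1 hf orbT.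
Qed.

Lemma avoidsP (M : {set E}) (T : {set V}) : reflect (forall x, x \in T -> ~~ covers ends M x) (avoids M T).
Proof. exact: forall_inP. Qed.

Lemma match_sub (M M' : {set E}) : M' \subset M -> matching ends M -> matching ends M'.
Proof.
move=> hsub hm; apply: match_intro.
  by move=> e he; apply: (match_noloop hm); exact: (fintype.subsetP hsub _ he).
by move=> e f x he hf; apply: (match_uniq hm); [exact: (fintype.subsetP hsub _ he)|exact: (fintype.subsetP hsub _ hf)].
Qed.

Lemma avoids_del (M : {set E}) (S : {set V}) u : u \in S ->
  avoids M S = avoids M (S :\ u) && ~~ covers ends M u.
Proof.
move=> uS; apply/avoidsP/andP.
  move=> h; split; last exact: h.
  by apply/avoidsP => x; rewrite in_setD1 => /andP [_ /h].
case=> /avoidsP h hu x xS; case: (eqVneq x u) => [->//|nxu].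
by apply: h; rewrite in_setD1 nxu.
Qed.

Lemma KE (S : {set V}) u e (M' : {set E}) : u \in S -> inc e u -> other e u \notin S ->
  [&& matching ends (e |: M'), avoids (e |: M') (S :\ u) & (e \in e |: M')]
   && ((e |: M') :\ e == M')
  = matching ends M' && avoids M' (other e u |: S).
Proof.
move=> uS ieu wS.
have nwu : other e u != u by apply: contraNneq wS => ->.
have nloop : ~~ is_loop ends e by rewrite (loop_other ieu).
have iex x : inc e x = (x == u) || (x == other e u) by apply: incident_other.
case: (boolP (e \in M')) => eM.
  have -> : ((e |: M') :\ e == M') = false.
    by apply/negbTE/eqP => h; move: eM; rewrite -h setD11.
  rewrite !andbF; symmetry; apply/negbTE/andP => -[_ /avoidsP /(_ u)].
  by rewrite in_setU1 uS orbT => /(_ isT) /coversP []; exists e.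
rewrite setU11 (setU1K eM) eqxx !andbT.
apply/andP/andP => -[hm ha].
  split; first by apply: match_sub hm; apply: finset.subsetUr.
  apply/avoidsP => x xT; apply/coversP => -[f fM fx].
  have xc : (x == u) || (x == other e u) || (x \in S :\ u).
    move: xT; rewrite in_setU1 in_setD1; case: (x == other e u); rewrite ?orbT //.
    by case: (x == u).
  case/orP: xc => [xuw|xS].
    have efx : inc e x by rewrite iex.
    have := match_uniq hm (setU11 e M') (setU1r e fM) efx fx.
    by move=> efe; move: eM; rewrite efe fM.
  move/avoidsP: ha => /(_ x xS) /negP; apply; rewrite coversU1; apply/orP; right.
  by apply/coversP; exists f.
split.
  apply: match_intro.
    move=> f; rewrite in_setU1 => /orP [/eqP -> //|]; exact: match_noloop.
  have key f x : f \in M' -> inc e x -> inc f x -> False.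
    move=> fM ex fx; move/avoidsP: ha => /(_ x).
    have : x \in other e u |: S.
      move: ex; rewrite iex in_setU1 => /orP [/eqP ->|->//]; by rewrite uS orbT.
    move=> /[swap] /[apply] /coversP; apply; by exists f.
  move=> f g x; rewrite !in_setU1 => /orP [/eqP ->|fM] /orP [/eqP ->|gM] //.
  - by move=> ex gx; case: (key g x gM ex gx).
  - by move=> fx ex; case: (key f x fM ex fx).
  - exact: (match_uniq hm fM gM).
apply/avoidsP => x; rewrite in_setD1 => /andP [nxu xS].
rewrite coversU1 iex (negbTE nxu) /=; apply/norP; split.
  by apply: contraNneq wS => <-.
by move/avoidsP: ha; apply; rewrite in_setU1 xS orbT.
Qed.

Variable R : realType.
Variable lambda : R.

Definition Zs (T : {set V}) : R :=
  \sum_(M : {set E} | matching ends M && avoids M T) lambda ^+ #|M|.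

Lemma matching0 : matching ends (@finset.set0 E).
Proof. by apply: match_intro => [e|e f x]; rewrite finset.in_set0. Qed.

Lemma avoids0 T : avoids (@finset.set0 E) T.
Proof. by apply/avoidsP => x _; apply/coversP => -[f]; rewrite finset.in_set0. Qed.

Hypothesis hl : 0 < lambda.

Lemma Zs_gt0 T : 0 < Zs T.
Proof.
rewrite /Zs (bigD1 (@finset.set0 E)) /=; last by rewrite matching0 avoids0.
rewrite cards0 expr0.
have : 0 <= \sum_(i | (matching ends i && avoids i T) && (i != finset.set0)) lambda ^+ #|i|.
  by apply: sumr_ge0 => M _; apply: exprn_ge0; apply: ltW.
lra.
Qed.

Lemma part2_e (S : {set V}) u e : u \in S -> inc e u ->
  \sum_(M | [&& matching ends M, avoids M (S :\ u) & (e \in M)]) lambda ^+ #|M| =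
  if other e u \notin S then lambda * Zs (other e u |: S) else 0.
Proof.
move=> uS ieu; case: ifP => wS.
  rewrite (reindex_onto (fun M' => e |: M') (fun M => M :\ e)); last first.
    by move=> M /and3P [_ _ eM]; rewrite finset.setD1K.
  under eq_bigl => M' do rewrite (KE M' uS ieu wS).
  rewrite /Zs mulr_sumr; apply: eq_bigr => M' /andP [_ ha].
  have eM : e \notin M'.
    apply/negP => eM; move/avoidsP: ha => /(_ u).
    by rewrite in_setU1 uS orbT => /(_ isT) /coversP []; exists e.
  by rewrite cardsU1 eM add1n exprS.
rewrite big_pred0 // => M; apply/and3P => -[hm ha eM].
have wS' : other e u \in S by move/negbFE: wS.
case: (eqVneq (other e u) u) => [wu|nwu].
  by move: (match_noloop hm eM); rewrite (loop_other ieu) wu eqxx.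
move/avoidsP: ha => /(_ (other e u)); rewrite in_setD1 nwu wS' => /(_ isT).
by move/coversP; apply; exists e => //; apply: incident_other_self.
Qed.

Lemma decomp (S : {set V}) u :
  \sum_(M | [&& matching ends M, avoids M (S :\ u) & covers ends M u]) lambda ^+ #|M| =
  \sum_(e | inc e u) \sum_(M | [&& matching ends M, avoids M (S :\ u) & (e \in M)])
      lambda ^+ #|M|.
Proof.
transitivity (\sum_(M | [&& matching ends M, avoids M (S :\ u) & covers ends M u])
   \sum_(e | inc e u && (e \in M)) lambda ^+ #|M|).
  apply: eq_bigr => M /and3P [hm _ /coversP [e0 e0M ie0]].
  rewrite (big_pred1 e0) // => e /=; apply/andP/eqP.
    by move=> [ie eM]; apply: (match_uniq hm eM e0M ie ie0).
  by move=> ->.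
rewrite (exchange_big_dep (fun e => inc e u)) /=; last by move=> M e _ /andP [].
apply: eq_bigr => e ie; apply: eq_bigl => M.
rewrite ie /=; apply/idP/idP.
  by case/andP => /and3P [-> -> _] ->.
case/and3P => -> -> eM; rewrite eM andbT /=; apply/coversP; by exists e.
Qed.

Lemma Zs_rec (S : {set V}) u : u \in S ->
  Zs (S :\ u) = Zs S + lambda *
    \sum_(e | inc e u && (other e u \notin S)) Zs (other e u |: S).
Proof.
move=> uS; rewrite /Zs (bigID (fun M => covers ends M u)) /= addrC; congr (_ + _).
  by apply: eq_bigl => M; rewrite (avoids_del M uS) andbA.
under eq_bigl do rewrite -andbA.
rewrite decomp (eq_bigr _ (fun e ie => part2_e uS ie)).
rewrite [RHS]mulr_sumr [RHS]big_mkcondr /=; apply: eq_bigr => e _.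
by case: ifP.
Qed.

End Match.
Section Godsil.
Variables (V E : finType) (ends : E -> V * V) (R : realType) (lambda : R).
Hypothesis hl : 0 < lambda.
Local Notation Zs := (Zs ends lambda).
Local Notation inc := (incident ends).
Local Notation other := (other ends).

Lemma cardC_lt (S : {set V}) w : w \notin S -> (#|~: (w |: S)| < #|~: S|)%N.
Proof.
move=> wS; apply: proper_card; rewrite finset.properC; apply/properP; split.
  by apply: finset.subsetUr.
by exists w; rewrite ?setU11.
Qed.

Lemma xrec_Z d u (S : {set V}) : u \in S -> (#|~: S| < d)%N ->
  xrec ends lambda d u S = Zs S / Zs (S :\ u).
Proof.
elim: d u S => [//|d IH] u S uS hd.
rewrite xrecS (Zs_rec ends lambda uS).
have -> : \sum_(e | inc e u && (other e u \notin S))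
    xrec ends lambda d (other e u) (other e u |: S) =
    (\sum_(e | inc e u && (other e u \notin S)) Zs (other e u |: S)) / Zs S.
  rewrite mulr_suml; apply: eq_bigr => e /andP [_ wS].
  rewrite IH ?setU11 ?(setU1K wS) //.
  by apply: leq_trans (cardC_lt wS) _.
have Z0 := Zs_gt0 ends hl S.
set X := \sum_(e | _) _.
have X0 : 0 <= X by apply: sumr_ge0 => e _; apply: ltW; apply: Zs_gt0.
have lX : 0 <= lambda * X by apply: mulr_ge0 => //; apply: ltW.
have h1 : Zs S + lambda * X != 0 by apply/lt0r_neq0; lra.
have h2 : Zs S != 0 by apply/lt0r_neq0.
have h3 : 1 + lambda * (X / Zs S) != 0.
  apply/lt0r_neq0; have : 0 <= lambda * (X / Zs S).
    by apply: mulr_ge0; [apply: ltW|apply: divr_ge0 => //; apply: ltW].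
  lra.
move: h1 h2 h3; clearbody X; move: (Zs S) => Z h1 h2 h3; field; by rewrite h1 h2.
Qed.

Lemma p_xrec v d : (#|V| < d)%N -> p_uncov ends lambda v = xrec ends lambda d v [set v].
Proof.
move=> hd; rewrite (xrec_Z (u:=v) (S:=[set v])) ?finset.set11 //; last first.
  by apply: leq_ltn_trans hd; apply: max_card.
rewrite /p_uncov finset.setDv; congr (_ / _).
  rewrite /Zs; apply: eq_bigl => M; congr (_ && _).
  apply/idP/avoidsP; first by move=> h x; rewrite finset.in_set1 => /eqP ->.
  by move=> /(_ v); rewrite finset.set11; apply.
rewrite /Zs /Zpart; apply: eq_bigl => M; rewrite -[LHS]andbT; congr (_ && _).
by symmetry; apply/avoidsP => x; rewrite finset.in_set0.
Qed.

End Godsil.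
Section Real.
Variable R : realType.

Lemma sum_sq_ge (I : finType) (P : pred I) (y : I -> R) :
  (\sum_(i | P i) y i) ^+ 2 <= #|P|%:R * \sum_(i | P i) y i ^+ 2.
Proof.
set Y := \sum_(i | P i) y i; set Q := \sum_(i | P i) y i ^+ 2.
have h : 0 <= \sum_(i | P i) \sum_(j | P j) (y i - y j) ^+ 2.
  by apply: sumr_ge0 => i _; apply: sumr_ge0 => j _; apply: sqr_ge0.
have cst (c : R) : \sum_(j | P j) c = #|P|%:R * c.
  by rewrite (eq_bigl (fun j => j \in P)) // sumr_const mulr_natl.
have e1 i : \sum_(j | P j) (y i - y j) ^+ 2 = #|P|%:R * y i ^+ 2 + Q - 2 * (y i * Y).
  rewrite (eq_bigr (fun j => y i ^+ 2 + y j ^+ 2 - 2 * (y i * y j)));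
    last by move=> j _; rewrite sqrrB; ring.
  rewrite sumrB big_split /= cst -/Q; congr (_ - _).
  by rewrite -mulr_sumr -mulr_sumr.
move: h; rewrite (eq_bigr _ (fun i _ => e1 i)) sumrB big_split /= -mulr_sumr -/Q.
rewrite cst -mulr_sumr -mulr_suml -/Y.
move=> h; nra.
Qed.

Lemma ln_close (a b K : R) : 0 < a -> 0 < b ->
  `|a - b| <= K * a -> `|a - b| <= K * b -> `|ln a - ln b| <= K.
Proof.
move=> a0 b0 ha hb.
have key (x y : R) : 0 < x -> 0 < y -> x - y <= K * y -> ln x - ln y <= K.
  move=> x0 y0 h; rewrite -ln_div ?posrE //.
  have -> : x / y = 1 + (x / y - 1) by ring.
  apply: le_trans (le_ln1Dx _) _.
    have : 0 < x / y by apply: divr_gt0.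
    lra.
  have -> : x / y - 1 = (x - y) / y by field; apply: lt0r_neq0.
  by rewrite ler_pdivrMr // mulrC.
rewrite ler_norml; apply/andP; split.
  rewrite lerNl opprB; apply: key => //.
  by apply: le_trans ha; rewrite -normrN opprB; apply: ler_norm.
by apply: key => //; apply: le_trans hb; apply: ler_norm.
Qed.

End Real.
Section Contract.
Variables (R : realType) (lambda : R) (D : nat).
Hypothesis hl : 0 < lambda.
Hypothesis hD : (1 <= D)%N.

Definition qD : R := Num.sqrt (1 + lambda * D%:R).
Definition gD : R := (qD - 1) / (qD + 1).

Lemma D_gt0 : 0 < (D%:R : R).
Proof. by rewrite ltr0n. Qed.

Lemma qD_sq : qD ^+ 2 = 1 + lambda * D%:R.
Proof. rewrite sqr_sqrtr //; have := mulr_gt0 hl D_gt0; lra. Qed.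

Lemma qD_gt1 : 1 < qD.
Proof.
have q0 : 0 <= qD by apply: sqrtr_ge0.
have := qD_sq; have := mulr_gt0 hl D_gt0; nra.
Qed.

Lemma gD_gt0 : 0 < gD.
Proof. rewrite /gD; have := qD_gt1 => h; apply: divr_gt0; lra. Qed.

Lemma gD_lt1 : gD < 1.
Proof. rewrite /gD; have := qD_gt1 => h; rewrite ltr_pdivrMr; lra. Qed.

Lemma g_bound (I : finType) (P : pred I) (y : I -> R) :
  (#|P| <= D)%N -> (forall i, 0 <= y i) ->
  lambda * \sum_(i | P i) (y i * (1 - y i)) <= gD * (1 + lambda * \sum_(i | P i) y i).
Proof.
move=> hP y0.
have := sum_sq_ge P y.
set Y := \sum_(i | P i) y i; set Q := \sum_(i | P i) y i ^+ 2.
have -> : \sum_(i | P i) (y i * (1 - y i)) = Y - Q.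
  by rewrite -sumrB; apply: eq_bigr => i _; rewrite mulrBr mulr1 expr2.
have Q0 : 0 <= Q by apply: sumr_ge0 => i _; apply: sqr_ge0.
have Y0 : 0 <= Y by apply: sumr_ge0.
have kD : (#|P|%:R : R) <= D%:R by rewrite ler_nat.
move=> hk.
have hDQ : Y ^+ 2 <= D%:R * Q by apply: le_trans hk _; apply: ler_wpM2r.
have q1 := qD_gt1; have qs := qD_sq.
rewrite /gD.
set q := qD in q1 qs *.
set s := lambda * Y.
have hT : s ^+ 2 <= (lambda * Q) * (q ^+ 2 - 1).
  rewrite qs /s; have -> : 1 + lambda * D%:R - 1 = lambda * D%:R by ring.
  have -> : lambda * Q * (lambda * D%:R) = lambda ^+ 2 * (D%:R * Q) by ring.
  rewrite exprMn; apply: ler_wpM2l => //; apply: sqr_ge0.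
have s0 : 0 <= s by apply: mulr_ge0 => //; apply: ltW.
rewrite mulrBr -/s; set T := lambda * Q in hT *.
rewrite mulrC mulrA ler_pdivlMr; last by lra.
have sq : 0 <= (s - (q - 1)) ^+ 2 by apply: sqr_ge0.
have T0 : 0 <= T by apply: mulr_ge0 => //; apply: ltW.
nra.
Qed.

End Contract.
Section Step.
Variable R : realType.

Lemma ystep (t t' A : R) : 0 <= t -> 0 <= t' -> 1 <= A -> t <= A * t' -> t' <= A * t ->
  `|(1 + t')^-1 - (1 + t)^-1| <= (A - 1) * A * ((1 + t)^-1 * (1 - (1 + t)^-1)).
Proof.
move=> t0 t'0 A1 h1 h2.
have n1 : 1 + t != 0 by apply/lt0r_neq0; lra.
have n2 : 1 + t' != 0 by apply/lt0r_neq0; lra.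
set W := ((1 + t) * (1 + t) * (1 + t'))^-1.
have W0 : 0 <= W by rewrite invr_ge0; apply: mulr_ge0; [apply: mulr_ge0|]; lra.
have e1 : (1 + t')^-1 - (1 + t)^-1 = ((t - t') * (1 + t)) * W.
  by rewrite /W; field; rewrite n1 n2.
have e2 : (A - 1) * A * ((1 + t)^-1 * (1 - (1 + t)^-1)) = ((A - 1) * A * t * (1 + t')) * W.
  by rewrite /W; field; rewrite n1 n2.
rewrite e1 e2 normrM (ger0_norm W0); apply: ler_wpM2r => //.
rewrite normrM (@ger0_norm _ (1 + t)); last by lra.
case: (lerP t t') => htt.

  have a : t' - t <= (A - 1) * t by lra.
  have b : 1 + t <= A * (1 + t') by nra.
  have c : 0 <= t' - t by lra.
  have d : 0 <= (A - 1) * t by apply: mulr_ge0; lra.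
  have := ler_pM c (ltW (lt_le_trans ltr01 (ler_wpDr t0 (lexx 1)))) a b.
  lra.
have a : t - t' <= (A - 1) * t' by lra.
have b : t' * (1 + t) <= A * t * (1 + t') by nra.
have c : 0 <= A - 1 by lra.
have := ler_wpM2l c b.
nra.
Qed.

End Step.
Section PhiSec.
Variables (R : realType) (lambda : R) (D : nat).
Hypothesis hl : 0 < lambda.
Hypothesis hD : (1 <= D)%N.
Local Notation g := (gD lambda D).

Definition Phi (I : finType) (P : pred I) (t : I -> R) : R :=
  ln (1 + lambda * \sum_(i | P i) (1 + t i)^-1).

Lemma Phi_step (I : finType) (P : pred I) (t t' : I -> R) (A : R) :
  (#|P| <= D)%N -> 1 <= A -> (forall i, 0 <= t i) -> (forall i, 0 <= t' i) ->
  (forall i, P i -> t i <= A * t' i) -> (forall i, P i -> t' i <= A * t i) ->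
  `|Phi P t' - Phi P t| <= (A - 1) * A * g.
Proof.
move=> hP A1 t0 t'0 h1 h2.
set K := (A - 1) * A * g.
have K0 : 0 <= K.
  apply: mulr_ge0; last exact: ltW (gD_gt0 hl hD).
  apply: mulr_ge0; lra.
have bnd (u u' : I -> R) : (forall i, 0 <= u i) -> (forall i, 0 <= u' i) ->
    (forall i, P i -> u i <= A * u' i) -> (forall i, P i -> u' i <= A * u i) ->
    `|(1 + lambda * \sum_(i | P i) (1 + u' i)^-1) - (1 + lambda * \sum_(i | P i) (1 + u i)^-1)|
    <= K * (1 + lambda * \sum_(i | P i) (1 + u i)^-1).
  move=> u0 u'0 g1 g2.
  have -> : (1 + lambda * \sum_(i | P i) (1 + u' i)^-1) - (1 + lambda * \sum_(i | P i) (1 + u i)^-1)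
     = lambda * \sum_(i | P i) ((1 + u' i)^-1 - (1 + u i)^-1).
    by rewrite sumrB; ring.
  rewrite normrM (gtr0_norm hl).
  apply: le_trans (ler_wpM2l (ltW hl) (ler_norm_sum _ _ _)) _.
  apply: le_trans (ler_wpM2l (ltW hl) (ler_sum _ (fun i Pi => ystep (u0 i) (u'0 i) A1 (g1 i Pi) (g2 i Pi)))) _.
  rewrite -mulr_sumr mulrCA /K -mulrA; apply: ler_wpM2l; first by apply: mulr_ge0; lra.
  apply: g_bound => // i; rewrite invr_ge0; have := u0 i; lra.
have pos (u : I -> R) : (forall i, 0 <= u i) -> 0 < 1 + lambda * \sum_(i | P i) (1 + u i)^-1.
  move=> u0; have : 0 <= lambda * \sum_(i | P i) (1 + u i)^-1.
    apply: mulr_ge0; first exact: ltW.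
    by apply: sumr_ge0 => i _; rewrite invr_ge0; have := u0 i; lra.
  lra.
apply: ln_close; [exact: pos|exact: pos| |exact: bnd].
by rewrite distrC; apply: bnd.
Qed.

End PhiSec.
Lemma exp_helper (R : realType) (a : R) : 0 <= a -> expR a - 1 <= a * expR a.
Proof.
move=> a0; have h := expR_ge1Dx (- a); rewrite expRN in h.
have E0 := expR_gt0 a.
have : (1 + - a) * expR a <= 1.
  by rewrite -(ler_pM2r E0) mulVf ?gt_eqF // in h.
lra.
Qed.

Lemma eps_limit (R : realType) (x b C : R) : 0 <= C ->
  (forall N : nat, (0 < N)%N -> x <= b + C / N%:R) -> x <= b.
Proof.
move=> C0 h; apply/ler_addgt0Pr => e e0.
set N := (Num.truncn (C / e)).+1.
apply: le_trans (h N isT) _; rewrite lerD2l.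
have N0 : 0 < (N%:R : R) by rewrite ltr0n.
have := truncnS_gt (C / e); rewrite -/N => hN.
rewrite ler_pdivrMr // mulrC -ler_pdivrMr //.
exact: ltW.
Qed.

Section Lip.
Variables (R : realType) (lambda : R) (D : nat).
Hypothesis hl : 0 < lambda.
Hypothesis hD : (1 <= D)%N.
Local Notation g := (gD lambda D).
Local Notation Phi := (Phi lambda).

Lemma Phi_lip (I : finType) (P : pred I) (t eta : I -> R) (d : R) :
  (#|P| <= D)%N -> (forall i, 0 <= t i) -> 0 <= d -> (forall i, `|eta i| <= d) ->
  `|Phi P (fun i => t i * expR (eta i)) - Phi P t| <= g * d.
Proof.
move=> hP t0 d0 he.
have g0 := gD_gt0 hl hD.
apply: (@eps_limit _ _ _ (g * (2 * d ^+ 2 * expR (2 * d)))).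
  by apply: mulr_ge0; [exact: ltW|apply: mulr_ge0; [apply: mulr_ge0 => //; apply: sqr_ge0|apply: expR_ge0]].
move=> N N0.
have Nr : 0 < (N%:R : R) by rewrite ltr0n.
set a := d / N%:R.
have a0 : 0 <= a by apply: divr_ge0 => //; apply: ltW.
set A := expR a.
have A1 : 1 <= A by rewrite /A -expR0 ler_expR.
pose conf (k : nat) i := t i * expR (k%:R / N%:R * eta i).
have c0 k i : 0 <= conf k i by apply: mulr_ge0 => //; apply: expR_ge0.
have cS k i : conf k.+1 i = conf k i * expR (eta i / N%:R).
  rewrite /conf -[RHS]mulrA -expRD; congr (_ * expR _).
  by rewrite -addn1 natrD; field; apply: lt0r_neq0.
have ea i : - a <= eta i / N%:R <= a.
  have := he i; rewrite ler_norml => /andP [h1 h2].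
  have hi : 0 <= (N%:R : R)^-1 by rewrite invr_ge0; apply: ltW.
  by rewrite /a -mulNr !ler_wpM2r.
have tel k : `|Phi P (conf k) - Phi P (conf 0)| <= k%:R * ((A - 1) * A * g).
  elim: k => [|k IH]; first by rewrite subrr normr0 mul0r.
  apply: le_trans (ler_distD (Phi P (conf k)) _ _) _.
  have -> : (k.+1%:R : R) = k%:R + 1 by rewrite -addn1 natrD.
  rewrite mulrDl mul1r addrC lerD //.
  apply: (Phi_step hl hD hP A1 (c0 k) (c0 k.+1)) => i _; rewrite cS.
    rewrite mulrCA -[X in X <= _]mulr1; apply: ler_wpM2l => //.
    rewrite /A -expRD; apply: le_trans (expR_ge1Dx _); have /andP[] := ea i; lra.
  rewrite mulrC; apply: ler_wpM2r => //; rewrite /A ler_expR; have /andP[] := ea i; lra.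
have cN : Phi P (conf N) = Phi P (fun i => t i * expR (eta i)).
  rewrite /Phi /conf; congr (ln (1 + lambda * _)); apply: eq_bigr => i _.
  by rewrite divff ?mul1r // gt_eqF.
have c00 : Phi P (conf 0) = Phi P t.
  rewrite /Phi /conf; congr (ln (1 + lambda * _)); apply: eq_bigr => i _.
  by rewrite mul0r mul0r expR0 mulr1.
rewrite -cN -c00; apply: le_trans (tel N) _.
have hA : A - 1 <= a * A by apply: exp_helper.
have h2 : expR (2 * a) - 1 <= 2 * a * expR (2 * d).
  apply: le_trans (exp_helper _) _; first by apply: mulr_ge0.
  apply: ler_wpM2l; first by apply: mulr_ge0.
  rewrite ler_expR ler_pM2l // /a ler_pdivrMr // ler_peMr // ler1n //.
have hAA : A * A = expR (2 * a) by rewrite /A -expRD; congr expR; ring.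
have Na : N%:R * a = d by rewrite /a; field; apply: lt0r_neq0.
have A0 : 0 <= A by lra.
have step1 : N%:R * ((A - 1) * A * g) <= N%:R * (a * A * A) * g.
  have hA2 : (A - 1) * A <= a * A * A by apply: ler_wpM2r.
  have -> : N%:R * ((A - 1) * A * g) = (N%:R * g) * ((A - 1) * A) by ring.
  have -> : N%:R * (a * A * A) * g = (N%:R * g) * (a * A * A) by ring.
  by apply: ler_wpM2l => //; apply: mulr_ge0; apply: ltW.
apply: le_trans step1 _.
have -> : N%:R * (a * A * A) * g = (N%:R * a) * (A * A) * g by ring.
rewrite hAA Na.
have e0 : expR (2 * a) <= 1 + 2 * a * expR (2 * d) by lra.
have : d * expR (2 * a) * g <= d * (1 + 2 * a * expR (2 * d)) * g.
  apply: ler_wpM2r; first exact: ltW.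
  by apply: ler_wpM2l.
move=> h; apply: le_trans h _.
have -> : d * (1 + 2 * a * expR (2 * d)) * g = g * d + g * (2 * d * a * expR (2 * d)) by ring.
rewrite lerD2l.
have -> : g * (2 * d ^+ 2 * expR (2 * d)) / N%:R = g * (2 * d * (d / N%:R) * expR (2 * d)).
  by field; apply: lt0r_neq0.
by [].
Qed.

End Lip.
Section Lip2.
Variables (R : realType) (lambda : R) (D : nat).
Hypothesis hl : 0 < lambda.
Hypothesis hD : (1 <= D)%N.
Local Notation g := (gD lambda D).
Local Notation Phi := (Phi lambda).

Lemma Phi_lip2 (I : finType) (P : pred I) (t t' : I -> R) (d : R) :
  (#|P| <= D)%N -> (forall i, 0 <= t i) -> (forall i, 0 <= t' i) -> 0 <= d ->
  (forall i, P i -> t i <= expR d * t' i) -> (forall i, P i -> t' i <= expR d * t i) ->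
  `|Phi P t' - Phi P t| <= g * d.
Proof.
move=> hP t0 t'0 d0 h1 h2.
pose eta i := if P i && (0 < t i) then ln (t' i / t i) else 0.
have pos i : P i -> 0 < t i -> 0 < t' i.
  move=> Pi ti; rewrite lt_def t'0 andbT; apply/negP => /eqP e.
  by move: (h1 i Pi); rewrite e mulr0; lra.
have He i : `|eta i| <= d.
  rewrite /eta; case: ifP => [/andP [Pi ti]|_]; last by rewrite normr0.
  have t'i := pos i Pi ti.
  have q0 : 0 < t' i / t i by apply: divr_gt0.
  rewrite ler_norml; apply/andP; split.
    rewrite -[X in X <= _]expRK ler_ln ?posrE ?expR_gt0 // expRN.
    rewrite ler_pdivlMr // mulrC ler_pdivrMr ?expR_gt0 // mulrC.
    by apply: h1.
  rewrite -[X in _ <= X]expRK ler_ln ?posrE ?expR_gt0 //.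
  by rewrite ler_pdivrMr //; apply: h2.
have -> : Phi P t' = Phi P (fun i => t i * expR (eta i)).
  rewrite /Phi; congr (ln (1 + lambda * _)); apply: eq_bigr => i Pi.
  rewrite /eta Pi /=; case: ifP => ti.
    by rewrite lnK ?posrE ?divr_gt0 ?pos // mulrC divfK // gt_eqF.
  have te : t i = 0 by apply/eqP; rewrite eq_le t0 andbT leNgt ti.
  have t'e : t' i = 0 by apply/eqP; rewrite eq_le t'0 andbT; move: (h2 i Pi); rewrite te mulr0.
  by rewrite te t'e mul0r.
exact: Phi_lip.
Qed.

End Lip2.
Lemma sum_le_card (R : realType) (I : finType) (P : pred I) (y : I -> R) :
  (forall i, y i <= 1) -> \sum_(i | P i) y i <= #|P|%:R.
Proof.
move=> h; apply: le_trans (ler_sum _ (fun i _ => h i)) _.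
by rewrite (eq_bigl (fun j => j \in P)) // sumr_const.
Qed.

Lemma ratio_of_ln (R : realType) (z z' d : R) : 0 < z -> 0 < z' ->
  `|ln z - ln z'| <= d -> z <= expR d * z'.
Proof.
move=> z0 z'0; rewrite ler_norml => /andP [_ h].
rewrite -(lnK z0) -(lnK z'0) -expRD ler_expR; lra.
Qed.

Section Err.
Variables (V E : finType) (ends : E -> V * V) (R : realType) (lambda : R) (D : nat).
Hypothesis hl : 0 < lambda.
Hypothesis hD : (1 <= D)%N.
Hypothesis hdeg : max_degree_le ends D.
Local Notation inc := (incident ends).
Local Notation other := (other ends).
Local Notation X := (xrec ends lambda).
Local Notation g := (gD lambda D).

Lemma card_children u (S : {set V}) :
  (#|[pred e | inc e u && (other e u \notin S)]| <= D)%N.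
Proof.
apply: leq_trans (hdeg u).
apply: leq_trans (_ : #|[set e | (ends e).1 == u] :|: [set e | (ends e).2 == u]| <= _)%N.
  apply: fintype.subset_leq_card; apply/fintype.subsetP => e.
  rewrite !inE /incident => /andP [-> _] //.
by case: (leq_card_setU [set e | (ends e).1 == u] [set e | (ends e).2 == u]).
Qed.

Definition Lc : R := ln (1 + lambda * D%:R).

Lemma cD_gt0 : 0 < lambda * D%:R.
Proof. by apply: mulr_gt0 => //; rewrite ltr0n. Qed.

Lemma xrec_bnd d u S : (1 + lambda * D%:R)^-1 <= X d u S <= 1.
Proof.
have c0 := cD_gt0.
elim: d u S => [|d IH] u S.
  rewrite /= lexx andbT invf_le1; lra.
rewrite xrecS.
set s := \sum_(e | _) _.
have s0 : 0 <= s.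
  apply: sumr_ge0 => e _; have /andP [h _] := IH (other e u) (other e u |: S).
  apply: le_trans h; rewrite invr_ge0; lra.
have sD : s <= D%:R.
  apply: le_trans (sum_le_card _ (fun e => (proj2 (andP (IH (other e u) (other e u |: S)))))) _.
  by rewrite ler_nat card_children.
have ls : lambda * s <= lambda * D%:R by apply: ler_wpM2l => //; apply: ltW.
have ls0 : 0 <= lambda * s by apply: mulr_ge0 => //; apply: ltW.
apply/andP; split.
  rewrite lef_pV2 ?posrE; lra.
rewrite invf_le1; lra.
Qed.

Lemma xrec_gt0 d u S : 0 < X d u S.
Proof.
have /andP [h _] := xrec_bnd d u S; apply: lt_le_trans h.
rewrite invr_gt0; have := cD_gt0; lra.
Qed.

Lemma base_err a b : (1 + lambda * D%:R)^-1 <= a <= 1 -> (1 + lambda * D%:R)^-1 <= b <= 1 ->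
  `|ln a - ln b| <= Lc.
Proof.
have c0 := cD_gt0.
have p0 : 0 < (1 + lambda * D%:R)^-1 by rewrite invr_gt0; lra.
have key x : (1 + lambda * D%:R)^-1 <= x <= 1 -> - Lc <= ln x <= 0.
  case/andP => h1 h2; have x0 : 0 < x by apply: lt_le_trans h1.
  rewrite ln_le0 // andbT /Lc -lnV ?posrE; last by lra.
  by rewrite ler_ln ?posrE.
move=> /key /andP [a1 a2] /key /andP [b1 b2].
rewrite ler_norml; apply/andP; split; lra.
Qed.

Definition tk k u S e : R :=
  lambda * \sum_(f | inc f (other e u) && (other f (other e u) \notin (other e u |: S)))
     X k (other f (other e u)) (other f (other e u) |: (other e u |: S)).

Lemma tk_ge0 k u S e : 0 <= tk k u S e.
Proof.
apply: mulr_ge0; first exact: ltW.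
by apply: sumr_ge0 => f _; apply: ltW; apply: xrec_gt0.
Qed.

Lemma lnX2 k u S : ln (X k.+2 u S) =
  - Phi lambda [pred e | inc e u && (other e u \notin S)] (tk k u S).
Proof.
rewrite xrecS lnV ?posrE; last first.
  have : 0 <= lambda * \sum_(e | inc e u && (other e u \notin S))
      X k.+1 (other e u) (other e u |: S).
    by apply: mulr_ge0; [exact: ltW|apply: sumr_ge0 => e _; apply: ltW; apply: xrec_gt0].
  lra.
congr (- ln (1 + lambda * _)); apply: eq_bigr => e _.
by rewrite xrecS.
Qed.

Lemma Lc_ge0 : 0 <= Lc.
Proof. by apply: ln_ge0; have := cD_gt0; lra. Qed.

Lemma xrec_err d m u S :
  `|ln (X d u S) - ln (X (d + m) u S)| <= g ^+ (d./2) * Lc.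
Proof.
suff H : forall d, (forall m u S, `|ln (X d u S) - ln (X (d + m) u S)| <= g ^+ (d./2) * Lc)
   /\ (forall m u S, `|ln (X d.+1 u S) - ln (X (d.+1 + m) u S)| <= g ^+ (d.+1./2) * Lc).
  by case: (H d).
clear d m u S; elim=> [|d [IH1 IH2]].
  by split=> m u S; apply: le_trans (base_err (xrec_bnd _ _ _) (xrec_bnd _ _ _)) _; rewrite /= expr0 mul1r.
split; first exact: IH2.
move=> m u S.
have -> : (d.+2 + m)%N = (d + m).+2 by rewrite !addSn.
rewrite !lnX2.
have -> : forall a b : R, - a - - b = b - a by move=> a b; ring.
have g0 := gD_gt0 hl hD.
set del := g ^+ (d./2) * Lc.
have del0 : 0 <= del by apply: mulr_ge0; [apply: exprn_ge0; apply: ltW|apply: Lc_ge0].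
have -> : g ^+ (d.+2./2) * Lc = g * del by rewrite /del /= exprS mulrA.
apply: (Phi_lip2 hl hD (card_children u S) (@tk_ge0 d u S) (@tk_ge0 (d + m) u S) del0).
  move=> e _; rewrite /tk mulrCA; apply: ler_wpM2l; first exact: ltW.
  rewrite mulr_sumr; apply: ler_sum => f _.
  by apply: ratio_of_ln; [apply: xrec_gt0|apply: xrec_gt0|apply: IH1].
move=> e _; rewrite /tk mulrCA; apply: ler_wpM2l; first exact: ltW.
rewrite mulr_sumr; apply: ler_sum => f _.
by apply: ratio_of_ln; [apply: xrec_gt0|apply: xrec_gt0|rewrite distrC; apply: IH1].
Qed.

End Err.
Section Final.
Variables (R : realType) (lambda : R).
Hypothesis hl : 0 < lambda.

Definition clD (D : nat) : R := ln ((gD lambda D)^-1).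
Definition aD (eps : R) (D : nat) : R := (Lc lambda D + ln eps^-1) / clD D.
Definition hbar (eps : R) (D : nat) : nat := ((Num.truncn (aD eps D)).+1).*2.

Section FixD.
Variable D : nat.
Hypothesis hD : (1 <= D)%N.
Local Notation g := (gD lambda D).
Local Notation q := (qD lambda D).
Local Notation c := (clD D).
Local Notation L := (Lc lambda D).

Lemma g0 : 0 < g. Proof. exact: gD_gt0. Qed.
Lemma g1 : g < 1. Proof. exact: gD_lt1. Qed.
Lemma q1 : 1 < q. Proof. exact: qD_gt1. Qed.

Lemma c_gt0 : 0 < c.
Proof. by apply: ln_gt0; rewrite invf_gt1; [exact: g1|exact: g0]. Qed.

Lemma gq : g = 1 - 2 / (q + 1).
Proof. rewrite /gD; have := q1 => h; field; apply: lt0r_neq0; lra. Qed.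

Lemma c_lb : 2 / (q + 1) <= c.
Proof.
have G0 := g0.
have : ln (1 + (g - 1)) <= g - 1 by apply: le_ln1Dx; lra.
rewrite addrC subrK /clD lnV ?posrE // gq; lra.
Qed.

Lemma c_ub : c <= 2 / (q - 1).
Proof.
have G0 := g0; have Q1 := q1.
have gi : 0 < g^-1 by rewrite invr_gt0.
have : ln (1 + (g^-1 - 1)) <= g^-1 - 1 by apply: le_ln1Dx; lra.
rewrite addrC subrK.
have -> : g^-1 - 1 = 2 / (q - 1).
  rewrite /gD invf_div; field; apply: lt0r_neq0; lra.
by [].
Qed.

Lemma L_gt0 : 0 < L.
Proof. apply: ln_gt0; have := cD_gt0 hl hD; lra. Qed.

Lemma gpow n (eps : R) : 0 < eps -> aD eps D < n%:R -> g ^+ n * L <= eps.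
Proof.
move=> e0 ha.
have C0 := c_gt0; have G0 := g0; have L0 := L_gt0.
have ge : g = expR (- c) by rewrite /clD lnV ?posrE // opprK lnK.
rewrite ge -expRM_natl -[L]lnK ?posrE // -expRD -[X in _ <= X]lnK ?posrE //.
rewrite ler_expR.
move: ha; rewrite /aD ltr_pdivrMr // lnV ?posrE // => ha.
have := ln_sublinear L0.
lra.
Qed.

Local Notation sD := (Num.sqrt (D%:R : R)).

Lemma sD_ge1 : 1 <= sD.
Proof. by rewrite -[X in X <= _]sqrtr1 ler_wsqrtr // ler1n. Qed.

Lemma D_ineq : 1 + lambda * D%:R <= (1 + lambda) * D%:R.
Proof. rewrite mulrDl mul1r; have : (1 : R) <= D%:R by rewrite ler1n. lra. Qed.

Lemma q_le : q <= Num.sqrt (1 + lambda) * sD.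
Proof.
rewrite -sqrtrM; last by apply: addr_ge0 => //; apply: ltW.
by apply: ler_wsqrtr; apply: D_ineq. Qed.

Lemma L_le : L <= ln (1 + lambda) + ln D%:R.
Proof.
have D1 : (1 : R) <= D%:R by rewrite ler1n.
have hl0 := hl.
have p1 : 0 < 1 + lambda by lra.
have p2 : (0 : R) < D%:R by lra.
have p3 : 0 < 1 + lambda * D%:R by have := cD_gt0 hl hD; lra.
rewrite -lnM ?posrE // ler_ln ?posrE //; first exact: D_ineq.
exact: mulr_gt0.
Qed.

Lemma hbar_itv eps : 0 <= aD eps D ->
  2 * aD eps D < (hbar eps D)%:R <= 2 * aD eps D + 2.
Proof.
move=> a0; have /andP [h1 h2] := truncn_itv a0.
rewrite /hbar -muln2 natrM.
have -> : ((Num.truncn (aD eps D)).+1%:R : R) = (Num.truncn (aD eps D))%:R + 1.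
  by rewrite -addn1 natrD.
apply/andP; split.
  move: h2; rewrite -addn1 natrD; lra.
lra.
Qed.

Lemma clause2_D eps : 0 < eps -> eps < 2^-1 ->
  (hbar eps D)%:R <= ((Num.sqrt (1 + lambda) + 1) * (2 * ln (1 + lambda) + 3) + 4)
    * sD * ln (eps^-1) * (1 + ln D%:R) ^+ 1.
Proof.
move=> e0 e2.
have hl0 := hl.
rewrite expr1.
have C0 := c_gt0; have L0 := L_gt0; have Q1 := q1.
set l := ln eps^-1.
have hl2 : 2^-1 < l.
  have : ln (1 + (eps - 1)) <= eps - 1 by apply: le_ln1Dx; lra.
  rewrite addrC subrK /l lnV ?posrE //; lra.
have a0 : 0 <= aD eps D.
  by rewrite /aD -/l; apply: divr_ge0; lra.
have /andP [_ hb] := hbar_itv a0.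
apply: le_trans hb _.
have s10 : 0 <= Num.sqrt (1 + lambda) by apply: sqrtr_ge0.
have l10 : 0 <= ln (1 + lambda) by apply: ln_ge0; lra.
have lD0 : 0 <= ln (D%:R : R) by apply: ln_ge0; rewrite ler1n.
have sD1 := sD_ge1.
have qle := q_le; have Lle := L_le.
have h2a : 2 * aD eps D <= (q + 1) * (L + l).
  rewrite /aD -/l mulrA ler_pdivrMr //.
  have := c_lb; rewrite ler_pdivrMr; last lra.
  move=> h; have Ll : 0 <= L + l by lra.
  have := ler_wpM2r Ll h.
  have -> : (q + 1) * (L + l) * c = c * (q + 1) * (L + l) by ring.
  by [].
set s1 := Num.sqrt (1 + lambda) in s10 qle *.
set l1 := ln (1 + lambda) in l10 Lle *.
set lD := ln (D%:R : R) in lD0 Lle *.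
have A : (q + 1) * (L + l) <= (s1 + 1) * sD * (l1 + lD + l).
  apply: ler_pM.
  - lra.
  - lra.
  - rewrite mulrDl mul1r; lra.
  - lra.
have B : l1 + lD + l <= (2 * l1 + 3) * l * (1 + lD).
  have m1 : 0 <= l1 * (2 * l - 1) by apply: mulr_ge0; lra.
  have m2 : 0 <= lD * (3 * l - 1) by apply: mulr_ge0; lra.
  have m3 : 0 <= l1 * l * lD by apply: mulr_ge0; [apply: mulr_ge0|]; lra.
  have -> : (2 * l1 + 3) * l * (1 + lD) = l1 * (2 * l - 1) + l1 + lD * (3 * l - 1) + lD
     + 2 * (l1 * l * lD) + 3 * l by ring.
  lra.
have B' : (s1 + 1) * sD * (l1 + lD + l) <= (s1 + 1) * sD * ((2 * l1 + 3) * l * (1 + lD)).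
  apply: ler_wpM2l => //; apply: mulr_ge0; lra.
have Cc : 2 <= 4 * sD * l * (1 + lD).
  have m0 : 0 <= sD * lD by apply: mulr_ge0; lra.
  have m1 : 1 <= sD * (1 + lD) by rewrite mulrDr mulr1; lra.
  have m2 : 2^-1 * 1 <= l * (sD * (1 + lD)) by apply: ler_pM; lra.
  have -> : 4 * sD * l * (1 + lD) = 4 * (l * (sD * (1 + lD))) by ring.
  lra.
have -> : ((s1 + 1) * (2 * l1 + 3) + 4) * sD * l * (1 + lD) =
   (s1 + 1) * sD * ((2 * l1 + 3) * l * (1 + lD)) + 4 * sD * l * (1 + lD) by ring.
lra.
Qed.

Local Open Scope classical_set_scope.
Lemma clause3a :
  (fun eps : R => (hbar eps D)%:R / ln (eps^-1)) @ (0:R)^'+ --> 2 / c.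
Proof.
have C0 := c_gt0; have L0 := L_gt0.
set K := 2 * L / c + 2.
have K0 : 0 <= K.
  have : 0 <= 2 * L / c by apply: divr_ge0; lra.
  rewrite /K; lra.
apply/cvgrPdist_le => e e0.
set r := expR (- (K / e) - 1).
have Ke : 0 <= K / e by apply: divr_ge0 => //; apply: ltW.
near=> x.
have x0 : 0 < x by near: x; exact: nbhs_right_gt.
have xr : x < r by near: x; apply: nbhs_right_lt; apply: expR_gt0.
have lx : ln x < - (K / e) - 1.
  by rewrite -[X in _ < X]expRK ltr_ln ?posrE ?expR_gt0.
set l := ln x^-1.
have le : K / e + 1 < l by rewrite /l lnV ?posrE //; lra.
have l0 : 0 < l by lra.
have a0 : 0 <= aD x D by rewrite /aD -/l; apply: divr_ge0; lra.
have /andP [h1 h2] := hbar_itv a0.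
set H := (hbar x D)%:R in h1 h2 *.
have ac : aD x D * c = L + l by rewrite /aD -/l divfK // gt_eqF.
have e1 : H / l - 2 / c = (H * c - 2 * l) / (l * c) by field; rewrite !gt_eqF.
have lc : 0 < l * c by apply: mulr_gt0.
have hc1 : 2 * aD x D * c <= H * c by apply: ler_wpM2r; lra.
have hc2 : H * c <= (2 * aD x D + 2) * c by apply: ler_wpM2r; lra.
rewrite distrC e1 ger0_norm; last first.
  apply: divr_ge0; last lra.
  have : 2 * aD x D * c = 2 * (L + l) by rewrite -ac; ring.
  lra.
rewrite ler_pdivrMr //.
have : (2 * aD x D + 2) * c = 2 * L + 2 * l + 2 * c by rewrite mulrDl -mulrA ac; ring.
have : K * c = 2 * L + 2 * c by rewrite /K; field; rewrite gt_eqF.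
have : K <= e * l.
  by rewrite mulrC -ler_pdivrMr //; lra.
move=> h3 h4 h5.
have : K * c <= e * l * c by apply: ler_wpM2r; lra.
have -> : e * (l * c) = e * l * c by ring.
lra.
Unshelve. all: by end_near.
Qed.

Lemma L_close : `|Num.sqrt lambda - 2 / c / sD| <= (1 + (Num.sqrt lambda)^-1) / sD.
Proof.
have hl0 := hl.
have C0 := c_gt0; have Q1 := q1; have sD1 := sD_ge1.
set s := Num.sqrt lambda.
have s0 : 0 < s by rewrite sqrtr_gt0.
have sD0 : 0 < sD by lra.
set Lq := 2 / c.
have Lup : Lq <= q + 1.
  have := c_lb; rewrite ler_pdivrMr; last lra.
  by move=> h; rewrite /Lq ler_pdivrMr // mulrC.
have Llo : q - 1 <= Lq.
  have := c_ub; rewrite ler_pdivlMr; last lra.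
  by move=> h; rewrite /Lq ler_pdivlMr // mulrC.
have ssD : (s * sD) ^+ 2 = lambda * D%:R.
  rewrite exprMn !sqr_sqrtr ?ler0n //; lra.
have qs := qD_sq hl hD.
have ssD0 : 0 < s * sD by apply: mulr_gt0.
have k1 : (q - s * sD) * (q + s * sD) = 1.
  have -> : (q - s * sD) * (q + s * sD) = q ^+ 2 - (s * sD) ^+ 2 by ring.
  by rewrite qs ssD; ring.
have qlo : s * sD <= q.
  have q0 : 0 <= q by lra.
  rewrite -(ler_pXn2r (n := 2)) ?nnegrE //; [|lra]; rewrite ssD qs; lra.
have qup : q - s * sD <= s^-1.
  have d0 : 0 <= q - s * sD by lra.
  have h1 : (q - s * sD) * (s * sD + s * sD) <= (q - s * sD) * (q + s * sD).
    by apply: ler_wpM2l => //; lra.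
  have h2 : (q - s * sD) * s <= (q - s * sD) * (s * sD).
    by apply: ler_wpM2l => //; rewrite -[X in X <= _]mulr1; apply: ler_wpM2l; lra.
  have h3 : (q - s * sD) * (s * sD) <= (q - s * sD) * (s * sD + s * sD).
    by apply: ler_wpM2l => //; lra.
  rewrite -(ler_pM2r s0) mulVf ?gt_eqF //.
  lra.
have -> : s - Lq / sD = - ((Lq - s * sD) / sD) by field; rewrite gt_eqF.
rewrite normrN normrM [`|sD^-1|]gtr0_norm; last by rewrite invr_gt0.
apply: ler_wpM2r; first by rewrite invr_ge0; lra.
rewrite ler_norml; apply/andP; split.
  have : 0 <= s^-1 by rewrite invr_ge0; lra.
  lra.
lra.
Qed.

End FixD.

Local Open Scope classical_set_scope.
Lemma clause3b :
  (fun D : nat => 2 / clD D / Num.sqrt D%:R) @ \oo --> Num.sqrt lambda.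
Proof.
have hl0 := hl.
apply/cvgrPdist_le => e e0.
set s := Num.sqrt lambda.
have s0 : 0 < s by rewrite sqrtr_gt0.
set K2 := 1 + s^-1.
have K20 : 0 < K2.
  have : 0 < s^-1 by rewrite invr_gt0.
  rewrite /K2; lra.
set N := (Num.truncn ((K2 / e) ^+ 2)).+1.
exists N => // n /= hn.
have n1 : (1 <= n)%N by apply: leq_trans hn.
apply: le_trans (L_close n1) _.
have nN : (K2 / e) ^+ 2 <= n%:R.
  apply: ltW; apply: lt_le_trans (truncnS_gt _) _; by rewrite ler_nat.
have sq : K2 / e <= Num.sqrt n%:R.
  rewrite -[X in X <= _](@ger0_norm _ (K2 / e)); last by apply: divr_ge0 => //; lra.
  by rewrite -sqrtr_sqr ler_wsqrtr.
have sn0 : 0 < Num.sqrt (n%:R : R) by rewrite sqrtr_gt0 ltr0n.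
rewrite ler_pdivrMr // mulrC -ler_pdivrMr //.
Qed.

Lemma clause1 (eps : R) (D : nat) : 0 < eps -> (1 <= D)%N ->
  forall (V E : finType) (ends : E -> V * V),
    max_degree_le ends D ->
    forall (v : V) (h : nat), (1 <= h)%N -> (hbar eps D <= h)%N ->
      `| ln (x_root ends lambda h v) - ln (p_uncov ends lambda v) | <= eps.
Proof.
move=> e0 hD V E ends hdeg v h _ hh.
rewrite (@p_xrec V E ends R lambda hl v (h + #|V|.+1)); last by rewrite addnS ltnS leq_addl.
rewrite /x_root.
apply: le_trans (xrec_err hl hD hdeg h #|V|.+1 v [set v]) _.
apply: gpow => //.
apply: lt_le_trans (truncnS_gt _) _.
rewrite ler_nat -(doubleK (Num.truncn (aD eps D)).+1).
exact: half_leq.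
Qed.

End Final.
Unset Implicit Arguments.
Set Strict Implicit.
Local Open Scope classical_set_scope.

Theorem lemma1 (R : realType) (lambda : R) (hlambda : 0 < lambda) :
  exists hbar : R -> nat -> nat,
    (* correctness of the truncation depth *)
    (forall (eps : R) (D : nat), 0 < eps -> (1 <= D)%N ->
      forall (V E : finType) (ends : E -> V * V),
        max_degree_le ends D ->
        forall (v : V) (h : nat), (1 <= h)%N -> (hbar eps D <= h)%N ->
          `| ln (x_root ends lambda h v) - ln (p_uncov ends lambda v) | <= eps)
    (* hbar = O~(sqrt D * log (1/eps)) : polylog factors in D hidden *)
    /\ (exists (C : R) (k : nat), 0 < C /\
         forall (eps : R) (D : nat), 0 < eps -> eps < 2^-1 -> (1 <= D)%N ->
           (hbar eps D)%:R <= C * Num.sqrt D%:R * ln (eps^-1) * (1 + ln D%:R) ^+ k)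
    (* lim_{D -> oo} (1/sqrt D) lim_{eps -> 0+} hbar eps D / log(1/eps) = sqrt lambda *)
    /\ (exists L : nat -> R,
         (forall D : nat, (1 <= D)%N ->
            (fun eps : R => (hbar eps D)%:R / ln (eps^-1)) @ (0:R)^'+ --> L D)
         /\ ((fun D : nat => L D / Num.sqrt D%:R) @ \oo --> Num.sqrt lambda)).
Proof.
exists (hbar lambda); split; first exact: clause1.
split.
  exists ((Num.sqrt (1 + lambda) + 1) * (2 * ln (1 + lambda) + 3) + 4), 1%N; split.
    have s0 : 0 <= Num.sqrt (1 + lambda) by apply: sqrtr_ge0.
    have l0 : 0 <= ln (1 + lambda) by apply: ln_ge0; have := hlambda; lra.
    have : 0 <= (Num.sqrt (1 + lambda) + 1) * (2 * ln (1 + lambda) + 3).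
      by apply: mulr_ge0; lra.
    lra.
  by move=> eps D e0 e2 hD; apply: clause2_D.
exists (fun D => 2 / clD lambda D); split.
  by move=> D hD; apply: clause3a.
exact: clause3b.
Qed.
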